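(* Let $M$ be the metric space \[M:=\Big\{\Big(a,\tfrac{1}{2^{n}}\Big)\colon a\in[0,1],\ n\in\mathbb{N}\Big\}\cup \Big\{(a,b)\colon a\in\{0,1\},\ b\in\Big[0,\tfrac{1}{2}\Big]\Big\}\subseteq\mathbb{R}^2\] with the metric \[d\big((a,b),(c,e)\big):=\begin{cases} |a-c|, & \text{if }b=e,\\ \min\{a+c,\,2-a-c\}+|b-e|, &\text{if } b\neq e, \end{cases}\] and base point $(0,0)$. Let $x=(0,0)$, $y=(1,0)$, and $\pi_2(a,b)=b$. Let $\varepsilon,\delta>0$ and let $\nu\in\operatorname{conv}\big(\mathrm{Mol}_{\delta,1}(M)\big)$. If there exists $g\in B_{\mathrm{Lip}_0(M)}$ such that $g(\nu)=\|\nu\|$ and $|g(m_{xy})|<\varepsilon$, then there exists $f\in B_{\mathrm{Lip}_0(M)}$ such that \[f(\nu)>\frac{\|\nu\|-\varepsilon-2\delta}{1+\varepsilon+2\delta}\] and $f(p)=0$ for every $p\in M$ with $\pi_2(p)\le\delta$.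
   Context: For a pointed metric space $(M,d,0)$, $\mathrm{Lip}_0(M)$ is the Banach space of Lipschitz functions $f\colon M\to\mathbb{R}$ with $f(0)=0$, normed by the best Lipschitz constant. The Lipschitz-free space $\mathcal{F}(M)$ is the norm-closed linear span of the evaluation functionals $\delta_u$ ($\delta_u(f)=f(u)$), $u\in M$, in $\mathrm{Lip}_0(M)^*$; its dual is $\mathrm{Lip}_0(M)$, and elements of $\mathrm{Lip}_0(M)$ act on $\mathcal{F}(M)$ accordingly. For $u\neq v$ in $M$, the molecule is $m_{uv}=(\delta_u-\delta_v)/d(u,v)\in\mathcal{F}(M)$. For $\delta,\varepsilon>0$, $\mathrm{Mol}_{\delta,\varepsilon}(M)=\{m_{uv}\colon u,v\in M,\ u\neq v,\ \delta<\pi_2(u)<\varepsilon,\ \delta<\pi_2(v)<\varepsilon\}$, and $\operatorname{conv}$ denotes the convex hull. $B_X$ denotes the closed unit ball; $\mathbb{N}=\{1,2,\dots\}$. *)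

(* Defs.v *)
From Stdlib Require Import Reals List.
From Coquelicot Require Import Coquelicot.
Import ListNotations.
Open Scope R_scope.

Definition pt := (R * R)%type.

Definition inM (p : pt) : Prop :=
  (exists (a : R) (n : nat), (1 <= n)%nat /\ 0 <= a <= 1 /\ p = (a, (/ 2) ^ n))
  \/ ((fst p = 0 \/ fst p = 1) /\ 0 <= snd p <= / 2).

Definition pi2 (p : pt) : R := snd p.

Definition dist (p q : pt) : R :=
  let (a, b) := p in let (c, e) := q in
  if Req_EM_T b e then Rabs (a - c)
  else Rmin (a + c) (2 - a - c) + Rabs (b - e).

Definition base : pt := (0, 0).

(* f belongs to the closed unit ball of Lip_0(M) (only values on M matter). *)
Definition inBallLip0 (f : pt -> R) : Prop :=
  f base = 0 /\ forall p q, inM p -> inM q -> Rabs (f p - f q) <= dist p q.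

(* A finite formal convex combination sum_i l_i m_{u_i v_i} of molecules,
   represented by the list of triples (l_i, u_i, v_i). *)
Definition combo := list (R * pt * pt)%type.

Definition evalF (f : pt -> R) (nu : combo) : R :=
  fold_right (fun (t : (R * pt * pt)%type) acc =>
    match t with (l, u, v) => l * ((f u - f v) / dist u v) + acc end) 0 nu.

Definition molecule (u v : pt) : combo := [(1, u, v)].

Definition inConvMol (delta eps : R) (nu : combo) : Prop :=
  List.Forall (fun (t : (R * pt * pt)%type) => match t with (l, u, v) =>
            0 <= l /\ inM u /\ inM v /\ u <> v /\
            delta < pi2 u < eps /\ delta < pi2 v < eps end) nu
  /\ fold_right (fun (t : (R * pt * pt)%type) acc => fst (fst t) + acc) 0 nu = 1.

Definition freeNorm (nu : combo) : R :=
  real (Lub_Rbar (fun r => exists f, inBallLip0 f /\ r = evalF f nu)).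

(* Main.v *)
Require Import Defs.
From Stdlib Require Import Reals List Lra Lia.
From Coquelicot Require Import Coquelicot.
Open Scope R_scope.
Local Notation dist := Defs.dist.

Lemma inM_fst p : inM p -> 0 <= fst p <= 1.
Proof.
  intros [[a [n [Hn [Ha ->]]]] | [[H|H] _]]; simpl; lra.
Qed.

Lemma half_pow n : (1 <= n)%nat -> 0 <= (/2)^n <= /2.
Proof.
  intros Hn. induction n as [|n IH]; [lia|].
  destruct n as [|n].
  - simpl; lra.
  - assert (H : (1 <= S n)%nat) by lia. specialize (IH H).
    simpl in *; lra.
Qed.

Lemma inM_snd p : inM p -> 0 <= snd p <= /2.
Proof.
  intros [[a [n [Hn [Ha ->]]]] | [_ H]]; simpl; auto using half_pow.
Qed.

Lemma dist_ge_fst p q : inM p -> inM q -> Rabs (fst p - fst q) <= dist p q.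
Proof.
  intros Hp Hq. pose proof (inM_fst p Hp). pose proof (inM_fst q Hq).
  destruct p as [a b], q as [c e]; simpl in *. unfold dist.
  destruct (Req_EM_T b e); [lra|].
  unfold Rmin; destruct (Rle_dec (a+c) (2-a-c)); split_Rabs; lra.
Qed.

Lemma dist_low (delta : R) p q : inM p -> inM q -> delta < snd p -> snd q <= delta ->
  0 <= delta ->
  fst p + snd p - delta <= dist p q \/ 1 - fst p + snd p - delta <= dist p q.
Proof.
  intros Hp Hq H1 H2 H3. pose proof (inM_fst p Hp). pose proof (inM_fst q Hq).
  destruct p as [a b], q as [c e]; simpl in *. unfold dist.
  destruct (Req_EM_T b e); [lra|].
  destruct (Rle_dec (a+c) (2-a-c)); [left|right];
  unfold Rmin; destruct (Rle_dec (a+c) (2-a-c)); split_Rabs; lra.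
Qed.

Lemma dist_g0 (delta : R) a b : 0 <= a <= 1 -> delta < b -> dist (a,b) (0,delta) = a + b - delta.
Proof.
  intros Ha Hb. unfold dist. destruct (Req_EM_T b delta); [lra|].
  unfold Rmin; destruct Rle_dec; split_Rabs; lra.
Qed.

Lemma dist_g1 (delta : R) a b : 0 <= a <= 1 -> delta < b -> dist (a,b) (1,delta) = 1 - a + b - delta.
Proof.
  intros Ha Hb. unfold dist. destruct (Req_EM_T b delta); [lra|].
  unfold Rmin; destruct Rle_dec; split_Rabs; lra.
Qed.

Lemma dist_sym p q : dist p q = dist q p.
Proof.
  destruct p as [a b], q as [c e]. unfold dist.
  destruct (Req_EM_T b e), (Req_EM_T e b); try (exfalso; lra).
  - apply Rabs_minus_sym.
  - rewrite Rabs_minus_sym. f_equal. unfold Rmin.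
    destruct (Rle_dec (a+c) (2-a-c)), (Rle_dec (c+a) (2-c-a)); lra.
Qed.

Definition MolP (delta e : R) := (fun (t : (R * pt * pt)%type) => match t with (l, u, v) =>
            0 <= l /\ inM u /\ inM v /\ u <> v /\
            delta < pi2 u < e /\ delta < pi2 v < e end).

Lemma evalF_A (F h : pt -> R) C delta e nu : C <> 0 ->
  (forall p, delta < snd p -> F p = h p / C) -> List.Forall (MolP delta e) nu ->
  evalF F nu = evalF h nu / C.
Proof.
  intros HC HF Hn. induction Hn as [|[[l u] v] r Hx Hr IH]; simpl.
  - field; auto.
  - destruct Hx as (_ & _ & _ & _ & [Hu _] & [Hv _]). unfold pi2 in *.
    rewrite IH, (HF u Hu), (HF v Hv). unfold Rdiv.
    set (id := / dist u v). field; auto.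
Qed.

Lemma evalF_B (g k : pt -> R) nu :
  evalF (fun p => g p - k p) nu = evalF g nu - evalF k nu.
Proof.
  induction nu as [|[[l u] v] r IH]; simpl; [ring|].
  rewrite IH. unfold Rdiv. ring.
Qed.

Lemma evalF_C a0 K delta e nu : List.Forall (MolP delta e) nu ->
  evalF (fun p => a0 + fst p * K) nu <=
  Rabs K * fold_right (fun (t : (R * pt * pt)%type) acc => fst (fst t) + acc) 0 nu.
Proof.
  intros Hn. induction Hn as [|[[l u] v] r Hx Hr IH]; simpl; [lra|].
  destruct Hx as (Hl & Hu & Hv & _).
  assert (Ht : (a0 + fst u * K - (a0 + fst v * K)) / dist u v <= Rabs K).
  { replace (a0 + fst u * K - (a0 + fst v * K)) with (K * (fst u - fst v)) by ring.
    pose proof (dist_ge_fst u v Hu Hv) as Hd.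
    pose proof (Rabs_pos K).
    destruct (Req_dec (dist u v) 0) as [E|E].
    - rewrite E. unfold Rdiv. rewrite Rinv_0, Rmult_0_r. auto.
    - assert (Hdp : 0 < dist u v).
      { pose proof (Rabs_pos (fst u - fst v)). lra. }
      apply (Rmult_le_reg_r (dist u v)); auto.
      unfold Rdiv. rewrite Rmult_assoc, Rinv_l by lra.
      eapply Rle_trans; [apply Rle_abs|]. rewrite Rmult_1_r, Rabs_mult.
      apply Rmult_le_compat_l; auto. }
  assert (l * ((a0 + fst u * K - (a0 + fst v * K)) / dist u v) <= l * Rabs K)
    by (apply Rmult_le_compat_l; auto).
  lra.
Qed.

Theorem mainTheorem2 (eps delta : R) (nu : combo) :
  0 < eps -> 0 < delta -> inConvMol delta 1 nu ->
  (exists g, inBallLip0 g /\ evalF g nu = freeNorm nu /\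
     Rabs (evalF g (molecule (0, 0) (1, 0))) < eps) ->
  exists f, inBallLip0 f /\
    evalF f nu > (freeNorm nu - eps - 2 * delta) / (1 + eps + 2 * delta) /\
    (forall p, inM p -> pi2 p <= delta -> f p = 0).
Proof.
  intros Heps Hdel [Hf Hs] [g [[Hg0 Hg] [Hgnu Hgm]]].
  assert (Hd2 : delta <= /2).
  { destruct nu as [|[[l u] v] r]; [simpl in Hs; lra|].
    apply Forall_inv in Hf. destruct Hf as (_ & Hu & _ & _ & [H1 _] & _).
    pose proof (inM_snd u Hu). unfold pi2 in H1. lra. }
  assert (Hgy : Rabs (g (1,0)) < eps).
  { unfold evalF, molecule in Hgm; simpl in Hgm.
    unfold dist in Hgm. destruct (Req_EM_T 0 0) as [_|n]; [|lra].
    replace (Rabs (0-1)) with 1 in Hgm by (split_Rabs; lra).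
    unfold base in Hg0. rewrite Hg0 in Hgm.
    replace (1 * ((0 - g (1, 0)) / 1) + 0) with (- g (1,0)) in Hgm by field.
    rewrite Rabs_Ropp in Hgm. exact Hgm. }
  assert (M0 : inM (0,delta)) by (right; simpl; lra).
  assert (M1 : inM (1,delta)) by (right; simpl; lra).
  assert (Mx : inM (0,0)) by (right; simpl; lra).
  assert (My : inM (1,0)) by (right; simpl; lra).
  set (a0 := g (0,delta)). set (b0 := g (1,delta)).
  assert (Ha0 : Rabs a0 <= delta).
  { pose proof (Hg _ _ M0 Mx) as H. unfold base in Hg0. rewrite Hg0 in H.
    unfold dist in H. destruct (Req_EM_T delta 0); [lra|].
    unfold Rmin in H; destruct Rle_dec; [|lra].
    replace (Rabs (delta - 0)) with delta in H by (split_Rabs; lra).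
    unfold a0. replace (g (0,delta) - 0) with (g (0,delta)) in H by ring. lra. }
  assert (Hb0 : Rabs (b0 - g (1,0)) <= delta).
  { pose proof (Hg _ _ M1 My) as H.
    unfold dist in H. destruct (Req_EM_T delta 0); [lra|].
    unfold Rmin in H; destruct Rle_dec; [lra|].
    replace (Rabs (delta - 0)) with delta in H by (split_Rabs; lra).
    unfold b0. lra. }
  set (K := b0 - a0).
  assert (HK : Rabs K < eps + 2 * delta).
  { unfold K. revert Ha0 Hb0 Hgy. split_Rabs; lra. }
  set (C := 1 + eps + 2 * delta).
  assert (HC : 0 < C) by (unfold C; lra).
  set (h := fun p : pt => g p - (a0 + fst p * K)).
  assert (Hh : forall p q, inM p -> inM q -> Rabs (h p - h q) <= (1 + Rabs K) * dist p q).
  { intros p q Hp Hq. pose proof (Hg p q Hp Hq). pose proof (dist_ge_fst p q Hp Hq).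
    unfold h.
    replace (g p - (a0 + fst p * K) - (g q - (a0 + fst q * K)))
      with ((g p - g q) - K * (fst p - fst q)) by ring.
    eapply Rle_trans; [apply Rabs_triang|]. rewrite Rabs_Ropp, Rabs_mult.
    pose proof (Rabs_pos K).
    assert (Rabs K * Rabs (fst p - fst q) <= Rabs K * dist p q)
      by (apply Rmult_le_compat_l; auto). lra. }
  assert (Hh0 : h (0,delta) = 0) by (unfold h, a0; simpl; ring).
  assert (Hh1 : h (1,delta) = 0) by (unfold h, K, b0; simpl; ring).
  set (F := fun p : pt => if Rle_dec (snd p) delta then 0 else h p / C).
  assert (Hlow : forall p q, inM p -> inM q -> delta < snd p -> snd q <= delta ->
            Rabs (h p) <= (1 + Rabs K) * dist p q).
  { intros p q Hp Hq H1 H2. pose proof (inM_fst p Hp) as Hfp.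
    pose proof (Rabs_pos K) as HKp.
    destruct (dist_low delta p q Hp Hq H1 H2 (Rlt_le _ _ Hdel)) as [Hd|Hd].
    - pose proof (Hh p _ Hp M0) as HH. rewrite Hh0, Rminus_0_r in HH.
      destruct p as [a b]. rewrite dist_g0 in HH by (simpl in *; lra).
      cbn [fst snd] in Hd. eapply Rle_trans; [exact HH|].
      apply Rmult_le_compat_l; lra.
    - pose proof (Hh p _ Hp M1) as HH. rewrite Hh1, Rminus_0_r in HH.
      destruct p as [a b]. rewrite dist_g1 in HH by (simpl in *; lra).
      cbn [fst snd] in Hd. eapply Rle_trans; [exact HH|].
      apply Rmult_le_compat_l; lra. }
  assert (HKC : (1 + Rabs K) <= C) by (unfold C; lra).
  assert (Hdiv : forall x y, 0 <= y -> Rabs x <= (1 + Rabs K) * y -> Rabs (x / C) <= y).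
  { intros x y Hy Hx. unfold Rdiv. rewrite Rabs_mult, Rabs_inv, (Rabs_right C) by lra.
    apply (Rmult_le_reg_r C); [lra|]. rewrite Rmult_assoc, Rinv_l by lra.
    assert ((1 + Rabs K) * y <= y * C) by (rewrite Rmult_comm; apply Rmult_le_compat_l; lra).
    lra. }
  exists F. split; [split|split].
  - unfold F, base; simpl. destruct Rle_dec; lra.
  - intros p q Hp Hq. pose proof (dist_ge_fst p q Hp Hq).
    assert (Hdp : 0 <= dist p q) by (eapply Rle_trans; [apply Rabs_pos|eauto]).
    unfold F. destruct (Rle_dec (snd p) delta), (Rle_dec (snd q) delta).
    + rewrite Rminus_0_r, Rabs_R0; auto.
    + rewrite Rminus_0_l, Rabs_Ropp. apply Hdiv; auto.
      rewrite dist_sym. apply Hlow; auto; lra.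
    + rewrite Rminus_0_r. apply Hdiv; auto. apply Hlow; auto; lra.
    + replace (h p / C - h q / C) with ((h p - h q) / C) by (field; lra).
      apply Hdiv; auto.
  - assert (E : evalF F nu = evalF h nu / C).
    { apply (evalF_A F h C delta 1 nu); [lra| |exact Hf].
      intros p Hp. unfold F. destruct Rle_dec; [lra|auto]. }
    rewrite E. unfold h. rewrite (evalF_B g (fun p => a0 + fst p * K)).
    pose proof (evalF_C a0 K delta 1 nu Hf) as Hc. rewrite Hs, Rmult_1_r in Hc.
    rewrite Hgnu. unfold Rdiv. apply Rmult_lt_compat_r.
    + apply Rinv_0_lt_compat; auto.
    + lra.
  - intros p _ Hp. unfold F, pi2 in *. destruct Rle_dec; lra.
Qed.
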